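(* For every set of formulas $\Gamma$ and every formula $\varphi$: $\Gamma\vdash_{\mathsf{NeL}}\varphi$ iff $\Gamma\models_{\mathfrak{N}_w}\varphi$.
   Context: Formulas are built from a countably infinite set of variables using binary $\otimes,\circ$ and unary ${}^{*}$; $\mathbf{Fm}$ is the formula algebra. Abbreviations (also used as term operations in algebras): $\varphi\Rightarrow\psi:=(\varphi\circ\psi^{*})^{*}$; $\varphi\Leftrightarrow\psi:=(\varphi\Rightarrow\psi)\otimes(\psi\Rightarrow\varphi)$; $\varphi\not\Leftrightarrow\psi:=(\varphi\Leftrightarrow\psi)^{*}$; $\varphi\not\Leftrightarrow\psi\not\Leftrightarrow\chi:=((\varphi\not\Leftrightarrow\psi)\otimes(\varphi\not\Leftrightarrow\chi))\otimes(\psi\not\Leftrightarrow\chi)$. $\mathsf{NeL}$: axiom schemes (A1) $\varphi\Rightarrow\varphi$; (A2) $(\varphi\circ\psi)\Rightarrow(\psi\circ\varphi)$; (A3) $\varphi\Rightarrow\varphi^{**}$; (A4) $(\varphi\Rightarrow\psi)\Rightarrow(\varphi\circ\psi)$; (A5) $(\varphi\otimes\psi)\Leftrightarrow(\psi\otimes\varphi)$; (A6) $((\varphi\otimes\psi)\Rightarrow\chi)\Rightarrow((\varphi\otimes\chi^{*})\Rightarrow\psi^{*})$; (A7) $(\varphi\not\Leftrightarrow\psi\not\Leftrightarrow\chi)\Rightarrow((\varphi\Rightarrow\psi)\Rightarrow((\psi\Rightarrow\chi)\Rightarrow(\varphi\Rightarrow\chi)))$; rules (applicable to arbitrary formulas)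 $\varphi\Rightarrow\psi,\varphi/\psi$; $\varphi,\psi/\varphi\otimes\psi$; $\varphi\Leftrightarrow\psi,\chi/\chi'$ ($\chi'$ obtained from $\chi$ by replacing one or more occurrences of $\varphi$ by $\psi$); $\varphi\otimes\psi/\varphi$. $\Gamma\vdash_{\mathsf{NeL}}\varphi$ means $\varphi$ is derivable from $\Gamma$ and axiom instances by these rules. A weak $\mathcal{N}$-algebra is an algebra $(A,\otimes,\circ,{}^{*})$ of type $(2,2,1)$ with $\otimes$ and $\circ$ commutative, $x^{**}=x$, and $(x\otimes y)\circ z=(x\otimes z)\circ y$. Let $\mathsf{t}\neq\mathsf{f}$ be two symbols not in $A$, $\overline{A}=A\cup\{\mathsf{t},\mathsf{f}\}$. An $\mathfrak{N}_w$-model is $(\mathbf A,\perp,\{\mathsf{t},\mathsf{f}\})$ with $\mathbf A$ a weak $\mathcal{N}$-algebra and $\perp\subseteq\overline{A}\times\overline{A}$ such that for all $x,y,z\in A$: (a) $x\perp x^{*}$; (b) $x\perp y^{*}$ and $y\perp x^{*}$ imply $x=y$; (c) $x\perp y$ iff $x\circ y\perp\mathsf{t}$; (d) $x\perp\mathsf{t}$ iff $x^{*}\perp\mathsf{f}$; (e) $x\perp\mathsf{f}$ and $y\perp\mathsf{f}$ iff $x\otimes y\perp\mathsf{f}$; (f) $(x\circ y^{*})^{*}\perp(x\circ y)^{*}$; (g) $x\perp y$ and $x\perp\mathsf{f}$ imply $y\perp\mathsf{t}$; (h) $(x\not\Leftrightarrow y\not\Leftrightarrow z)\perp((x\Rightarrow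 y)\Rightarrow((y\Rightarrow z)\Rightarrow(x\Rightarrow z)))^{*}$. $\mathfrak{N}_w$ is the class of all such models; $F_\perp=\{a\in A:a\perp\mathsf{f}\}$. $\Gamma\models_{\mathfrak{N}_w}\varphi$ iff there is a finite $\Gamma'\subseteq\Gamma$ such that for every $\mathfrak{N}_w$-model and every homomorphism $h:\mathbf{Fm}\to\mathbf A$, $h(\Gamma')\subseteq F_\perp$ implies $h(\varphi)\in F_\perp$. *)

(* Defs.v *)
From Stdlib Require Import List.
Import ListNotations.

Inductive fm : Type :=
| Var : nat -> fm
| Ot : fm -> fm -> fm
| Ci : fm -> fm -> fm
| St : fm -> fm.

Definition fimp (a b : fm) : fm := St (Ci a (St b)).
Definition fiff (a b : fm) : fm := Ot (fimp a b) (fimp b a).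
Definition fniff (a b : fm) : fm := St (fiff a b).
Definition fniff3 (a b c : fm) : fm := Ot (Ot (fniff a b) (fniff a c)) (fniff b c).

Inductive repl1 (p q : fm) : fm -> fm -> Prop :=
| r1_hit : repl1 p q p q
| r1_Ot_l : forall a a' b, repl1 p q a a' -> repl1 p q (Ot a b) (Ot a' b)
| r1_Ot_r : forall a b b', repl1 p q b b' -> repl1 p q (Ot a b) (Ot a b')
| r1_Ot_b : forall a a' b b', repl1 p q a a' -> repl1 p q b b' ->
    repl1 p q (Ot a b) (Ot a' b')
| r1_Ci_l : forall a a' b, repl1 p q a a' -> repl1 p q (Ci a b) (Ci a' b)
| r1_Ci_r : forall a b b', repl1 p q b b' -> repl1 p q (Ci a b) (Ci a b')
| r1_Ci_b : forall a a' b b', repl1 p q a a' -> repl1 p q b b' ->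
    repl1 p q (Ci a b) (Ci a' b')
| r1_St : forall a a', repl1 p q a a' -> repl1 p q (St a) (St a').

Inductive NeL_axiom : fm -> Prop :=
| A1 : forall a, NeL_axiom (fimp a a)
| A2 : forall a b, NeL_axiom (fimp (Ci a b) (Ci b a))
| A3 : forall a, NeL_axiom (fimp a (St (St a)))
| A4 : forall a b, NeL_axiom (fimp (fimp a b) (Ci a b))
| A5 : forall a b, NeL_axiom (fiff (Ot a b) (Ot b a))
| A6 : forall a b c,
    NeL_axiom (fimp (fimp (Ot a b) c) (fimp (Ot a (St c)) (St b)))
| A7 : forall a b c,
    NeL_axiom (fimp (fniff3 a b c)
                 (fimp (fimp a b) (fimp (fimp b c) (fimp a c)))).

Inductive NeL_derivable (Gamma : fm -> Prop) : fm -> Prop :=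
| d_hyp : forall a, Gamma a -> NeL_derivable Gamma a
| d_ax : forall a, NeL_axiom a -> NeL_derivable Gamma a
| d_mp : forall a b, NeL_derivable Gamma (fimp a b) -> NeL_derivable Gamma a ->
    NeL_derivable Gamma b
| d_adj : forall a b, NeL_derivable Gamma a -> NeL_derivable Gamma b ->
    NeL_derivable Gamma (Ot a b)
| d_repl : forall a b c c', NeL_derivable Gamma (fiff a b) ->
    NeL_derivable Gamma c -> repl1 a b c c' -> NeL_derivable Gamma c'
| d_simp : forall a b, NeL_derivable Gamma (Ot a b) -> NeL_derivable Gamma a.

Inductive bar (A : Type) : Type :=
| El : A -> bar A
| Tt : bar A
| Ff : bar A.
Arguments El {A} _.
Arguments Tt {A}.
Arguments Ff {A}.

Section Ops.
Variables (A : Type) (otm cir : A -> A -> A) (st : A -> A).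
Definition aimp (x y : A) : A := st (cir x (st y)).
Definition aiff (x y : A) : A := otm (aimp x y) (aimp y x).
Definition aniff (x y : A) : A := st (aiff x y).
Definition aniff3 (x y z : A) : A := otm (otm (aniff x y) (aniff x z)) (aniff y z).
End Ops.

Record NwModel (A : Type) : Type := {
  otm : A -> A -> A;
  cir : A -> A -> A;
  st : A -> A;
  perp : bar A -> bar A -> Prop;
  otm_comm : forall x y, otm x y = otm y x;
  cir_comm : forall x y, cir x y = cir y x;
  st_inv : forall x, st (st x) = x;
  otm_cir : forall x y z, cir (otm x y) z = cir (otm x z) y;
  ax_a : forall x, perp (El x) (El (st x));
  ax_b : forall x y, perp (El x) (El (st y)) -> perp (El y) (El (st x)) -> x = y;
  ax_c : forall x y, perp (El x) (El y) <-> perp (El (cir x y)) Tt;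
  ax_d : forall x, perp (El x) Tt <-> perp (El (st x)) Ff;
  ax_e : forall x y, (perp (El x) Ff /\ perp (El y) Ff) <-> perp (El (otm x y)) Ff;
  ax_f : forall x y, perp (El (st (cir x (st y)))) (El (st (cir x y)));
  ax_g : forall x y, perp (El x) (El y) -> perp (El x) Ff -> perp (El y) Tt;
  ax_h : forall x y z,
    perp (El (aniff3 A otm cir st x y z))
         (El (st (aimp A cir st (aimp A cir st x y)
                   (aimp A cir st (aimp A cir st y z) (aimp A cir st x z)))))
}.

Arguments otm {A} _ _ _.
Arguments cir {A} _ _ _.
Arguments st {A} _ _.
Arguments perp {A} _ _ _.

Definition Fperp {A : Type} (M : NwModel A) (a : A) : Prop := perp M (El a) Ff.

Definition is_hom {A : Type} (M : NwModel A) (h : fm -> A) : Prop :=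
  (forall a b, h (Ot a b) = otm M (h a) (h b)) /\
  (forall a b, h (Ci a b) = cir M (h a) (h b)) /\
  (forall a, h (St a) = st M (h a)).

Definition Nw_consequence (Gamma : fm -> Prop) (phi : fm) : Prop :=
  exists Gamma' : list fm,
    (forall g, In g Gamma' -> Gamma g) /\
    forall (A : Type) (M : NwModel A) (h : fm -> A),
      is_hom M h ->
      (forall g, In g Gamma' -> Fperp M (h g)) -> Fperp M (h phi).

(* Main.v *)
Require Import Defs.
From Stdlib Require Import List Setoid ClassicalEpsilon FunctionalExtensionality PropExtensionality ProofIrrelevance.
Import ListNotations.

Section Deriv.
Variable G : fm -> Prop.
Notation D := (NeL_derivable G).

Lemma simp_r a b : D (Ot a b) -> D b.
Proof.
  intro H. apply (d_simp _ b a).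
  apply (d_repl _ (Ot a b) (Ot b a) (Ot a b) (Ot b a)).
  - apply d_ax, A5.
  - exact H.
  - apply r1_hit.
Qed.

Lemma irefl a : D (fiff a a).
Proof. unfold fiff; apply d_adj; apply d_ax, A1. Qed.

Lemma isym a b : D (fiff a b) -> D (fiff b a).
Proof.
  intro H; unfold fiff in *; apply d_adj;
  [exact (simp_r _ _ H) | exact (d_simp _ _ _ H)].
Qed.

Lemma itrans a b c : D (fiff a b) -> D (fiff b c) -> D (fiff a c).
Proof.
  intros H1 H2. apply (d_repl _ b c (fiff a b) (fiff a c) H2 H1).
  unfold fiff, fimp. apply r1_Ot_b.
  - apply r1_St, r1_Ci_r, r1_St, r1_hit.
  - apply r1_St, r1_Ci_l, r1_hit.
Qed.

Lemma ictx a a' X Y : D (fiff a a') -> repl1 a a' X Y -> D (fiff X Y).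
Proof.
  intros H R. apply (d_repl _ a a' (fiff X X) (fiff X Y) H (irefl X)).
  unfold fiff, fimp. apply r1_Ot_b.
  - apply r1_St, r1_Ci_r, r1_St, R.
  - apply r1_St, r1_Ci_l, R.
Qed.

Lemma iOt a a' b b' : D (fiff a a') -> D (fiff b b') -> D (fiff (Ot a b) (Ot a' b')).
Proof.
  intros H1 H2. apply itrans with (Ot a' b).
  - apply (ictx _ _ _ _ H1). apply r1_Ot_l, r1_hit.
  - apply (ictx _ _ _ _ H2). apply r1_Ot_r, r1_hit.
Qed.

Lemma iCi a a' b b' : D (fiff a a') -> D (fiff b b') -> D (fiff (Ci a b) (Ci a' b')).
Proof.
  intros H1 H2. apply itrans with (Ci a' b).
  - apply (ictx _ _ _ _ H1). apply r1_Ci_l, r1_hit.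
  - apply (ictx _ _ _ _ H2). apply r1_Ci_r, r1_hit.
Qed.

Lemma iSt a a' : D (fiff a a') -> D (fiff (St a) (St a')).
Proof. intros H1. apply (ictx _ _ _ _ H1). apply r1_St, r1_hit. Qed.

Lemma ieqv a b : D (fiff a b) -> D a -> D b.
Proof. intros H H0. exact (d_repl _ a b a b H H0 (r1_hit a b)). Qed.

Lemma iimp a a' b b' : D (fiff a a') -> D (fiff b b') -> D (fimp a b) -> D (fimp a' b').
Proof.
  intros H1 H2 H. apply (ieqv (fimp a b)); auto.
  unfold fimp; apply iSt, iCi; auto; apply iSt; auto.
Qed.

Lemma dneg a : D (fiff (St (St a)) a).
Proof.
  unfold fiff. apply d_adj; [| apply d_ax, A3].
  assert (H: D (fiff (Ci (St a) (St (St a))) (Ci (St (St a)) (St a))))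
    by (apply d_adj; apply d_ax, A2).
  apply (d_repl _ _ _ _ _ H (d_ax G _ (A1 (St a)))).
  unfold fimp. apply r1_St, r1_hit.
Qed.

Lemma ocir x y z : D (fiff (Ci (Ot x y) z) (Ci (Ot x z) y)).
Proof.
  assert (K: forall y z, D (fimp (St (Ci (Ot x y) z)) (St (Ci (Ot x z) y)))).
  { intros y0 z0. pose proof (d_ax G _ (A6 x y0 (St z0))) as H.
    refine (iimp _ _ _ _ _ _ H); unfold fimp; apply iSt.
    - apply iCi; [apply irefl | apply dneg].
    - apply iCi; [apply iOt; [apply irefl | apply dneg] | apply dneg]. }
  assert (L: D (fiff (St (Ci (Ot x y) z)) (St (Ci (Ot x z) y)))) by (apply d_adj; apply K).
  apply (itrans _ _ _ (isym _ _ (dneg _))).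
  apply (itrans _ _ _ (iSt _ _ L)). apply dneg.
Qed.

Definition cls (a : fm) : fm -> Prop := fun b => D (fiff a b).
Definition Q := {P : fm -> Prop | exists a, P = cls a}.
Definition clsQ (a : fm) : Q := exist _ (cls a) (ex_intro _ a eq_refl).
Definition rep (X : Q) : fm :=
  proj1_sig (constructive_indefinite_description _ (proj2_sig X)).

Lemma rep_spec X : clsQ (rep X) = X.
Proof.
  unfold rep. destruct (constructive_indefinite_description _ _) as [a Ha]. simpl.
  destruct X as [P HP]; simpl in *. subst P. unfold clsQ.
  apply subset_eq_compat. reflexivity.
Qed.

Lemma clsQ_eq a b : clsQ a = clsQ b <-> D (fiff a b).
Proof.
  split.
  - intro H. assert (E: cls a = cls b) by (apply (f_equal (@proj1_sig _ _)) in H; exact H).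
    assert (H0: cls b b) by apply irefl. rewrite <- E in H0. exact H0.
  - intro H. unfold clsQ. apply subset_eq_compat.
    extensionality c; apply propositional_extensionality; unfold cls; split; intro H0.
    + apply (itrans _ _ _ (isym _ _ H) H0).
    + apply (itrans _ _ _ H H0).
Qed.

Lemma rep_fiff a : D (fiff (rep (clsQ a)) a).
Proof. apply clsQ_eq; apply rep_spec. Qed.

Lemma Q_ind X : exists a, X = clsQ a.
Proof. exists (rep X); symmetry; apply rep_spec. Qed.

Definition qotm (X Y : Q) : Q := clsQ (Ot (rep X) (rep Y)).
Definition qcir (X Y : Q) : Q := clsQ (Ci (rep X) (rep Y)).
Definition qst (X : Q) : Q := clsQ (St (rep X)).
Definition qperp (u v : bar Q) : Prop :=
  match u, v with
  | El X, El Y => D (St (Ci (rep X) (rep Y)))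
  | El X, Tt => D (St (rep X))
  | El X, Ff => D (rep X)
  | _, _ => False
  end.

Lemma qotm_c a b : qotm (clsQ a) (clsQ b) = clsQ (Ot a b).
Proof. apply clsQ_eq, iOt; apply rep_fiff. Qed.
Lemma qcir_c a b : qcir (clsQ a) (clsQ b) = clsQ (Ci a b).
Proof. apply clsQ_eq, iCi; apply rep_fiff. Qed.
Lemma qst_c a : qst (clsQ a) = clsQ (St a).
Proof. apply clsQ_eq, iSt; apply rep_fiff. Qed.

Lemma pEE a b : qperp (El (clsQ a)) (El (clsQ b)) <-> D (St (Ci a b)).
Proof.
  simpl. split; apply ieqv; [|apply isym]; apply iSt, iCi; apply rep_fiff.
Qed.
Lemma pET a : qperp (El (clsQ a)) Tt <-> D (St a).
Proof. simpl. split; apply ieqv; [|apply isym]; apply iSt; apply rep_fiff. Qed.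
Lemma pEF a : qperp (El (clsQ a)) Ff <-> D a.
Proof. simpl. split; apply ieqv; [|apply isym]; apply rep_fiff. Qed.

Ltac qsimp := repeat (rewrite qotm_c || rewrite qcir_c || rewrite qst_c).
Ltac qdes := repeat match goal with
  | X : Q |- _ => let a := fresh "a" in let E := fresh in
       destruct (Q_ind X) as [a E]; subst X end.

Definition QM : NwModel Q.
Proof.
  refine (Build_NwModel Q qotm qcir qst qperp _ _ _ _ _ _ _ _ _ _ _ _);
    intros; qdes; qsimp.
  - apply clsQ_eq, d_ax, A5.
  - apply clsQ_eq, d_adj; apply d_ax, A2.
  - apply clsQ_eq, dneg.
  - apply clsQ_eq, ocir.
  - apply pEE. exact (d_ax G _ (A1 a)).
  - rewrite qst_c in *. rewrite pEE in *. apply clsQ_eq, d_adj; assumption.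
  - rewrite pEE, pET. reflexivity.
  - rewrite pET, pEF. reflexivity.
  - rewrite !pEF. split.
    + intros [H1 H2]; apply d_adj; assumption.
    + intro H; split; [eapply d_simp; eauto | eapply simp_r; eauto].
  - apply pEE. exact (d_ax G _ (A4 a0 a)).
  - rename H into H1, H0 into H2. rewrite pEE in H1. rewrite pEF in H2. rewrite pET. apply (d_mp _ a0); [| exact H2].
    apply (ieqv (St (Ci a0 a))); [apply iSt, iCi; [apply irefl | apply isym, dneg] | exact H1].
  - unfold aniff3, aniff, aiff, aimp. qsimp. apply pEE.
    exact (d_ax G _ (A7 a1 a0 a)).
Defined.

Lemma QM_hom : is_hom QM clsQ.
Proof.
  split; [|split]; intros.
  - exact (eq_sym (qotm_c a b)).
  - exact (eq_sym (qcir_c a b)).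
  - exact (eq_sym (qst_c a)).
Qed.

Lemma complete phi : Nw_consequence G phi -> D phi.
Proof.
  intros [L [HL HM]].
  specialize (HM Q QM clsQ QM_hom).
  apply pEF. apply HM. intros g Hg. apply pEF. apply d_hyp, HL, Hg.
Qed.

End Deriv.

Section Sem.
Variables (A : Type) (M : NwModel A) (h : fm -> A).
Hypothesis Hh : is_hom M h.

Lemma h_imp a b : h (fimp a b) = st M (cir M (h a) (st M (h b))).
Proof. destruct Hh as [H1 [H2 H3]]; unfold fimp; rewrite H3, H2, H3; reflexivity. Qed.

Lemma h_imp' a b : h (fimp a b) = aimp A (cir M) (st M) (h a) (h b).
Proof. rewrite h_imp; reflexivity. Qed.

Lemma imp_sem a b : Fperp M (h (fimp a b)) <-> perp M (El (h a)) (El (st M (h b))).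
Proof.
  rewrite h_imp; unfold Fperp. rewrite <- (@ax_d A M), <- (@ax_c A M). reflexivity.
Qed.

Lemma Fperp_otm a b : Fperp M (h (Ot a b)) <-> Fperp M (h a) /\ Fperp M (h b).
Proof.
  destruct Hh as [H1 _]. rewrite H1. unfold Fperp. rewrite <- (@ax_e A M). reflexivity.
Qed.

Lemma ax_sound a : NeL_axiom a -> Fperp M (h a).
Proof.
  destruct Hh as [H1 [H2 H3]].
  intro Ha; destruct Ha.
  - apply imp_sem; apply ax_a.
  - apply imp_sem. rewrite !H2. rewrite (@cir_comm A M (h b) (h a)). apply ax_a.
  - apply imp_sem. rewrite !H3. rewrite (@st_inv A M). apply ax_a.
  - apply imp_sem. rewrite h_imp, H2. apply ax_f.
  - unfold fiff. apply Fperp_otm; split; apply imp_sem; rewrite !H1.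
    + rewrite (@otm_comm A M (h b) (h a)); apply ax_a.
    + rewrite (@otm_comm A M (h a) (h b)); apply ax_a.
  - apply imp_sem. rewrite !h_imp, !H1, !H3.
    rewrite (@st_inv A M (h b)).
    rewrite (@otm_cir A M (h a) (h b) (st M (h c))). apply ax_a.
  - apply imp_sem. rewrite !h_imp'.
    unfold fniff3, fniff, fiff.
    repeat (rewrite h_imp' || rewrite H1 || rewrite H3).
    exact (@ax_h A M (h a) (h b) (h c)).
Qed.

Lemma mp_sound a b : Fperp M (h (fimp a b)) -> Fperp M (h a) -> Fperp M (h b).
Proof.
  intros H1 H2. apply imp_sem in H1. pose proof (@ax_g A M _ _ H1 H2) as H.
  apply (@ax_d A M) in H. rewrite (@st_inv A M) in H. exact H.
Qed.

Lemma iff_sound a b : Fperp M (h (fiff a b)) -> h a = h b.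
Proof.
  unfold fiff. intro H. apply Fperp_otm in H. destruct H as [H H'].
  apply imp_sem in H. apply imp_sem in H'. exact (@ax_b A M _ _ H H').
Qed.

Lemma repl_sound p q c c' : repl1 p q c c' -> h p = h q -> h c = h c'.
Proof.
  destruct Hh as [H1 [H2 H3]].
  intros R E; induction R; rewrite ?H1, ?H2, ?H3; congruence.
Qed.

End Sem.

Lemma sound G phi : NeL_derivable G phi -> Nw_consequence G phi.
Proof.
  intro H; induction H.
  - exists [a]; split.
    + intros g [<-|[]]; assumption.
    + intros A M h Hh HL. apply HL. left; reflexivity.
  - exists []; split.
    + intros g [].
    + intros A M h Hh _. apply ax_sound; assumption.
  - destruct IHNeL_derivable1 as [L1 [HL1 HM1]].
    destruct IHNeL_derivable2 as [L2 [HL2 HM2]].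
    exists (L1 ++ L2); split.
    + intros g Hg; apply in_app_iff in Hg; destruct Hg; auto.
    + intros A M h Hh HL. apply (mp_sound A M h Hh a).
      * apply HM1; auto. intros; apply HL, in_app_iff; auto.
      * apply HM2; auto. intros; apply HL, in_app_iff; auto.
  - destruct IHNeL_derivable1 as [L1 [HL1 HM1]].
    destruct IHNeL_derivable2 as [L2 [HL2 HM2]].
    exists (L1 ++ L2); split.
    + intros g Hg; apply in_app_iff in Hg; destruct Hg; auto.
    + intros A M h Hh HL. apply (Fperp_otm A M h Hh); split.
      * apply HM1; auto. intros; apply HL, in_app_iff; auto.
      * apply HM2; auto. intros; apply HL, in_app_iff; auto.
  - destruct IHNeL_derivable1 as [L1 [HL1 HM1]].
    destruct IHNeL_derivable2 as [L2 [HL2 HM2]].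
    exists (L1 ++ L2); split.
    + intros g Hg; apply in_app_iff in Hg; destruct Hg; auto.
    + intros A M h Hh HL.
      assert (E : h a = h b).
      { apply (iff_sound A M h Hh). apply HM1; auto. intros; apply HL, in_app_iff; auto. }
      rewrite <- (repl_sound A M h Hh a b c c' H1 E).
      apply HM2; auto. intros; apply HL, in_app_iff; auto.
  - destruct IHNeL_derivable as [L [HL HM]].
    exists L; split; auto.
    intros A M h Hh HL'. apply (Fperp_otm A M h Hh a b). auto.
Qed.

Theorem theorem4p6 : forall (Gamma : fm -> Prop) (phi : fm),
  NeL_derivable Gamma phi <-> Nw_consequence Gamma phi.
Proof.
  intros Gamma phi; split; [apply sound | apply complete].
Qed.
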